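(* Let $\mathcal{K}: C^0[0,1]\to C^0[0,1]$ be the backstepping kernel operator, i.e. $k=\mathcal{K}(\beta)$ is the continuous solution of $k(x) = -\beta(x) + \int_0^x \beta(x-y)k(y)\,dy$ for $x\in[0,1]$. Then for any $B>0$ and any pair $\beta_1,\beta_2\in C^0[0,1]$ with $\|\beta_1\|_\infty\le B$ and $\|\beta_2\|_\infty\le B$, $$\|\mathcal{K}(\beta_1)-\mathcal{K}(\beta_2)\|_\infty \le e^{3B}\,\|\beta_1-\beta_2\|_\infty .$$
   Context: $\|\cdot\|_\infty$ denotes the supremum norm over $[0,1]$. The convolution is $(a*b)(x)=\int_0^x a(x-y)b(y)\,dy$, so the kernel equation reads $\mathcal{K}(\beta) = -\beta + \beta*\mathcal{K}(\beta)$. *)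

(* Defs.v *)
From Stdlib Require Import Reals.
From Coquelicot Require Import Coquelicot.
Open Scope R_scope.

Definition cont01 (f : R -> R) : Prop :=
  forall x, 0 <= x <= 1 ->
    filterlim f (within (fun y => 0 <= y <= 1) (locally x)) (locally (f x)).

(* Supremum norm over [0,1]: the least upper bound of { |f x| : x in [0,1] }.
   For f continuous on [0,1] this is a finite real number. *)
Definition supnorm (f : R -> R) : R :=
  real (Lub_Rbar (fun r => exists x, 0 <= x <= 1 /\ r = Rabs (f x))).

Definition is_kernel (beta k : R -> R) : Prop :=
  cont01 k /\
  forall x, 0 <= x <= 1 ->
    k x = - beta x + RInt (fun y => beta (x - y) * k y) 0 x.

(* Main.v *)
Require Import Defs.
From Stdlib Require Import Reals Lra.
From Coquelicot Require Import Coquelicot.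
Open Scope R_scope.

Definition clamp (x : R) : R := Rmax 0 (Rmin 1 x).

Lemma clamp_in x : 0 <= clamp x <= 1.
Proof. unfold clamp, Rmax, Rmin; repeat destruct Rle_dec; lra. Qed.

Lemma clamp_id x : 0 <= x <= 1 -> clamp x = x.
Proof. unfold clamp, Rmax, Rmin; repeat destruct Rle_dec; lra. Qed.

Lemma clamp_lip a b : Rabs (clamp a - clamp b) <= Rabs (a - b).
Proof. unfold clamp, Rmax, Rmin; repeat destruct Rle_dec; unfold Rabs; repeat destruct Rcase_abs; lra. Qed.

Lemma cont_clamp f : cont01 f -> forall x, continuous (fun z => f (clamp z)) x.
Proof.
  intros Hf x. unfold continuous.
  eapply filterlim_comp. 2: apply Hf, clamp_in.
  intros P [eps HP]. exists eps. intros y Hy. apply HP. 2: apply clamp_in.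
  revert Hy. unfold ball; simpl; unfold AbsRing_ball, abs, minus, plus, opp; simpl.
  intros H. eapply Rle_lt_trans. apply clamp_lip. exact H.
Qed.

Lemma cont_bounded (u : R -> R) : (forall x, continuous u x) ->
  exists M, forall x, 0 <= x <= 1 -> Rabs (u x) <= M.
Proof.
  intros Hu.
  destruct (continuity_ab_maj (fun x => Rabs (u x)) 0 1) as [c [Hc _]].
  lra. intros c _. apply continuity_pt_filterlim. apply continuous_Rabs_comp, Hu.
  exists (Rabs (u c)). intros; apply Hc; auto.
Qed.

Lemma sup_le f M : (forall x, 0 <= x <= 1 -> Rabs (f x) <= M) -> supnorm f <= M.
Proof.
  intros H. unfold supnorm.
  destruct (Lub_Rbar_correct (fun r => exists x, 0 <= x <= 1 /\ r = Rabs (f x))) as [Hub Hl].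
  assert (H1 : Rbar_le (Lub_Rbar (fun r => exists x, 0 <= x <= 1 /\ r = Rabs (f x))) M).
  { apply Hl. intros r [x [Hx ->]]. simpl. auto. }
  assert (H2 : Rbar_le (Rabs (f 0)) (Lub_Rbar (fun r => exists x, 0 <= x <= 1 /\ r = Rabs (f x)))).
  { apply Hub. exists 0. split; [lra|auto]. }
  destruct (Lub_Rbar _); simpl in *; try contradiction; auto.
Qed.

Lemma sup_ge f M : (forall x, 0 <= x <= 1 -> Rabs (f x) <= M) ->
  forall x, 0 <= x <= 1 -> Rabs (f x) <= supnorm f.
Proof.
  intros H x Hx. unfold supnorm.
  destruct (Lub_Rbar_correct (fun r => exists x, 0 <= x <= 1 /\ r = Rabs (f x))) as [Hub Hl].
  assert (H1 : Rbar_le (Lub_Rbar (fun r => exists x, 0 <= x <= 1 /\ r = Rabs (f x))) M).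
  { apply Hl. intros r [y [Hy ->]]. simpl. auto. }
  assert (H2 : Rbar_le (Rabs (f x)) (Lub_Rbar (fun r => exists x, 0 <= x <= 1 /\ r = Rabs (f x)))).
  { apply Hub. exists x. split; auto. }
  destruct (Lub_Rbar _); simpl in *; try contradiction; auto.
Qed.

Lemma int_exp S B x : 0 < B ->
  RInt (fun y => S * exp (B * y)) 0 x = S * (exp (B * x) - 1) / B.
Proof.
  intros HB. apply is_RInt_unique.
  replace (S * (exp (B * x) - 1) / B) with
    (minus ((fun y => S * exp (B*y) / B) x) ((fun y => S * exp (B*y) / B) 0)).
  2:{ unfold minus, plus, opp; simpl. rewrite Rmult_0_r, exp_0. field. lra. }
  apply (is_RInt_derive (fun y => S * exp (B*y) / B) (fun y => S * exp (B*y))).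
  - intros y _. auto_derive; auto. field. lra.
  - intros y _. apply (continuous_mult (fun _ => S) (fun y => exp (B*y))). apply continuous_const.
    apply continuous_exp_comp. apply (continuous_mult (fun _ => B) (fun x => x)). apply continuous_const. apply continuous_id.
Qed.

Lemma gron (u : R -> R) A B : 0 < B -> (forall x, continuous u x) ->
  (forall x, 0 <= x <= 1 -> Rabs (u x) <= A + B * RInt (fun y => Rabs (u y)) 0 x) ->
  forall x, 0 <= x <= 1 -> Rabs (u x) <= A * exp (B * x).
Proof.
  intros HB Hu Hi.
  destruct (continuity_ab_maj (fun x => Rabs (u x) * exp (- (B * x))) 0 1) as [c [Hc Hc01]].
  lra. intros c _. apply continuity_pt_filterlim.
  apply (continuous_mult (fun x => Rabs (u x)) (fun x => exp (- (B*x)))).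
  apply continuous_Rabs_comp, Hu.
  apply continuous_exp_comp. apply (continuous_opp (fun x => B * x)).
  apply (continuous_mult (fun _ => B) (fun x => x)). apply continuous_const. apply continuous_id.
  set (S := Rabs (u c) * exp (- (B * c))) in *.
  assert (HS : forall y, 0 <= y <= 1 -> Rabs (u y) <= S * exp (B * y)).
  { intros y Hy. specialize (Hc y Hy). simpl in Hc.
    replace (Rabs (u y)) with (Rabs (u y) * exp (- (B * y)) * exp (B * y)).
    apply Rmult_le_compat_r. left; apply exp_pos. exact Hc.
    rewrite Rmult_assoc, <- exp_plus. replace (- (B*y) + B*y) with 0 by ring.
    rewrite exp_0; ring. }
  assert (HI : forall x, 0 <= x <= 1 ->
     RInt (fun y => Rabs (u y)) 0 x <= S * (exp (B * x) - 1) / B).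
  { intros x Hx. rewrite <- int_exp by auto. apply RInt_le. lra.
    apply (ex_RInt_continuous (V:=R_CompleteNormedModule)). intros; apply continuous_Rabs_comp, Hu.
    apply (ex_RInt_continuous (V:=R_CompleteNormedModule)). intros z _.
    apply (continuous_mult (fun _ => S) (fun y => exp (B*y))). apply continuous_const.
    apply continuous_exp_comp. apply (continuous_mult (fun _ => B) (fun x => x)).
    apply continuous_const. apply continuous_id.
    intros y Hy. apply HS. lra. }
  assert (Huc : Rabs (u c) = S * exp (B * c)).
  { unfold S. rewrite Rmult_assoc, <- exp_plus. replace (- (B*c) + B*c) with 0 by ring.
    rewrite exp_0; ring. }
  assert (HSA : S <= A).
  { pose proof (Hi c Hc01) as H1. pose proof (HI c Hc01) as H2.
    apply Rmult_le_compat_l with (r := B) in H2; [|lra].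
    replace (B * (S * (exp (B * c) - 1) / B)) with (S * exp (B*c) - S) in H2 by (field; lra).
    lra. }
  intros x Hx. eapply Rle_trans. apply HS; auto.
  apply Rmult_le_compat_r. left; apply exp_pos. auto.
Qed.

Lemma exp_le x y : x <= y -> exp x <= exp y.
Proof. intros H. destruct (Rle_lt_or_eq_dec _ _ H) as [H1|H1]. left; apply exp_increasing; auto. subst; lra. Qed.

Lemma Rabs_sub_le a b : Rabs (a - b) <= Rabs a + Rabs b.
Proof. unfold Rabs; repeat destruct Rcase_abs; lra. Qed.

Lemma cmul (f g : R -> R) (x : R) : continuous f x -> continuous g x -> continuous (fun z => f z * g z) x.
Proof. intros Hf Hg. apply continuity_pt_filterlim. apply continuity_pt_mult; apply continuity_pt_filterlim; auto. Qed.

Lemma cplus (f g : R -> R) (x : R) : continuous f x -> continuous g x -> continuous (fun z => f z + g z) x.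
Proof. intros Hf Hg. apply continuity_pt_filterlim. apply continuity_pt_plus; apply continuity_pt_filterlim; auto. Qed.

Lemma csub (f g : R -> R) (x : R) : continuous f x -> continuous g x -> continuous (fun z => f z - g z) x.
Proof. intros Hf Hg. apply continuity_pt_filterlim. apply continuity_pt_minus; apply continuity_pt_filterlim; auto. Qed.

Lemma cshift (f : R -> R) a : (forall x, continuous f x) -> forall y, continuous (fun y => f (a - y)) y.
Proof. intros Hf y. apply (continuous_comp (fun y => a - y) f). 2: apply Hf.
  apply continuity_pt_filterlim. reg. Qed.

Lemma cshift2 (b : R -> R) a : cont01 b -> forall y, continuous (fun y => b (clamp (a - y))) y.
Proof. intros Hb. apply (cshift (fun z => b (clamp z))). apply cont_clamp; auto. Qed.

Lemma exRI (f : R -> R) a b : (forall x, continuous f x) -> ex_RInt f a b.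
Proof. intros H. apply (ex_RInt_continuous (V:=R_CompleteNormedModule)). intros; apply H. Qed.

Lemma int_clamp (b k : R -> R) x : 0 <= x <= 1 ->
  RInt (fun y => b (x - y) * k y) 0 x = RInt (fun y => b (clamp (x - y)) * k (clamp y)) 0 x.
Proof.
  intros Hx. apply RInt_ext. rewrite Rmin_left, Rmax_right by lra.
  intros y Hy. rewrite !clamp_id by lra. auto.
Qed.

Lemma clamped_bound (f : R -> R) : cont01 f -> forall z, Rabs (f (clamp z)) <= supnorm f.
Proof.
  intros Hf z. destruct (cont_bounded _ (cont_clamp f Hf)) as [M HM].
  apply (sup_ge f M). intros x Hx. rewrite <- (clamp_id x Hx) at 1. auto.
  apply clamp_in.
Qed.

Theorem lemma1 :
  forall (B : R) (beta1 beta2 k1 k2 : R -> R),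
    0 < B ->
    cont01 beta1 -> cont01 beta2 ->
    supnorm beta1 <= B -> supnorm beta2 <= B ->
    is_kernel beta1 k1 -> is_kernel beta2 k2 ->
    supnorm (fun x => k1 x - k2 x) <= exp (3 * B) * supnorm (fun x => beta1 x - beta2 x).
Proof.
  intros B b1 b2 k1 k2 HB c1 c2 s1 s2 [ck1 E1] [ck2 E2].
  pose proof (cont_clamp _ c1) as cb1. pose proof (cont_clamp _ c2) as cb2.
  pose proof (cont_clamp _ ck1) as ck1c. pose proof (cont_clamp _ ck2) as ck2c.
  assert (B1 : forall z, Rabs (b1 (clamp z)) <= B).
  { intros z; eapply Rle_trans; [apply clamped_bound; auto| auto]. }
  assert (B2 : forall z, Rabs (b2 (clamp z)) <= B).
  { intros z; eapply Rle_trans; [apply clamped_bound; auto| auto]. }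
  set (D := supnorm (fun x => b1 x - b2 x)).
  assert (HD : forall z, Rabs (b1 (clamp z) - b2 (clamp z)) <= D).
  { intros z. apply (sup_ge (fun x => b1 x - b2 x) (B + B)).
    intros x Hx. eapply Rle_trans. apply Rabs_sub_le.
    rewrite <- (clamp_id x Hx). specialize (B1 x). specialize (B2 x). lra.
    apply clamp_in. }
  assert (D0 : 0 <= D). { eapply Rle_trans. apply Rabs_pos. apply (HD 0). }
  assert (K1 : forall x, 0 <= x <= 1 -> Rabs (k1 (clamp x)) <= B * exp (B * x)).
  { apply gron; auto. intros x Hx. rewrite (clamp_id x Hx), E1 by auto.
    rewrite int_clamp by auto.
    eapply Rle_trans. apply Rabs_triang. rewrite Rabs_Ropp.
    apply Rplus_le_compat. rewrite <- (clamp_id x Hx). auto.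
    eapply Rle_trans. apply abs_RInt_le. lra.
    apply exRI. intros y. apply cmul. apply cshift2; auto. auto.
    assert (Hs : RInt (fun y => B * Rabs (k1 (clamp y))) 0 x = B * RInt (fun y => Rabs (k1 (clamp y))) 0 x).
    { exact (RInt_scal (V:=R_CompleteNormedModule) (fun y => Rabs (k1 (clamp y))) 0 x B
         (exRI _ _ _ (fun y => continuous_Rabs_comp _ _ (ck1c y)))). }
    rewrite <- Hs. apply RInt_le. lra.
    apply exRI. intros y. apply continuous_Rabs_comp. apply cmul. apply cshift2; auto. auto.
    apply exRI. intros y. apply (cmul (fun _ => B)). apply continuous_const. apply continuous_Rabs_comp. auto.
    intros y _. rewrite Rabs_mult. apply Rmult_le_compat_r. apply Rabs_pos. auto. }
  set (K := B * exp B).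
  assert (HK : forall z, Rabs (k1 (clamp z)) <= K).
  { intros z. rewrite <- (clamp_id (clamp z) (clamp_in z)).
    eapply Rle_trans. apply K1, clamp_in. unfold K.
    apply Rmult_le_compat_l. lra. apply exp_le. pose proof (clamp_in z). nra. }
  assert (K0 : 0 <= K). { eapply Rle_trans. apply Rabs_pos. apply (HK 0). }
  set (dc := fun z => k1 (clamp z) - k2 (clamp z)).
  assert (cdc : forall z, continuous dc z). { intros z; apply csub; auto. }
  assert (Hd : forall x, 0 <= x <= 1 -> Rabs (dc x) <= D * (1 + K) * exp (B * x)).
  { apply gron; auto. intros x Hx. unfold dc at 1. rewrite (clamp_id x Hx), E1, E2 by auto.
    rewrite !int_clamp by auto.
    set (F1 := fun y => b1 (clamp (x - y)) * k1 (clamp y)).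
    set (F2 := fun y => b2 (clamp (x - y)) * k2 (clamp y)).
    assert (eF1 : ex_RInt F1 0 x). { apply exRI. intros y. apply cmul. apply cshift2; auto. auto. }
    assert (eF2 : ex_RInt F2 0 x). { apply exRI. intros y. apply cmul. apply cshift2; auto. auto. }
    assert (Hm : RInt (fun y => F1 y - F2 y) 0 x = RInt F1 0 x - RInt F2 0 x).
    { exact (RInt_minus (V:=R_CompleteNormedModule) F1 F2 0 x eF1 eF2). }
    replace (- b1 x + RInt F1 0 x - (- b2 x + RInt F2 0 x)) with
      (- (b1 x - b2 x) + RInt (fun y => F1 y - F2 y) 0 x) by (rewrite Hm; ring).
    eapply Rle_trans. apply Rabs_triang. rewrite Rabs_Ropp.
    assert (Hx1 : Rabs (b1 x - b2 x) <= D). { rewrite <- (clamp_id x Hx). auto. }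
    eapply Rle_trans. apply Rplus_le_compat_r. exact Hx1.
    eapply Rle_trans. apply Rplus_le_compat_l. apply abs_RInt_le. lra.
    apply exRI. intros y. apply csub; apply cmul; try apply cshift2; auto.
    assert (eI : ex_RInt (fun y => Rabs (dc y)) 0 x).
    { apply exRI. intros y. apply continuous_Rabs_comp. auto. }
    assert (Hs : RInt (fun y => D * K + B * Rabs (dc y)) 0 x = D * K * x + B * RInt (fun y => Rabs (dc y)) 0 x).
    { rewrite (RInt_plus (V:=R_CompleteNormedModule) (fun _ => D * K) (fun y => B * Rabs (dc y))).
      rewrite (RInt_const (V:=R_CompleteNormedModule)).
      rewrite (RInt_scal (V:=R_CompleteNormedModule) (fun y => Rabs (dc y))) by auto.
      unfold plus, scal; simpl. unfold mult; simpl. ring.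
      apply exRI. intros; apply continuous_const.
      apply exRI. intros y. apply (cmul (fun _ => B)). apply continuous_const. apply continuous_Rabs_comp. auto. }
    assert (Hle : RInt (fun y => Rabs (F1 y - F2 y)) 0 x <= RInt (fun y => D * K + B * Rabs (dc y)) 0 x).
    { apply RInt_le. lra.
      apply exRI. intros y. apply continuous_Rabs_comp. apply csub; apply cmul; try apply cshift2; auto.
      apply exRI. intros y. apply (cplus (fun _ => D * K) (fun y => B * Rabs (dc y))).
      apply continuous_const. apply (cmul (fun _ => B)). apply continuous_const. apply continuous_Rabs_comp. auto.
      intros y _. unfold F1, F2, dc.
      replace (b1 (clamp (x - y)) * k1 (clamp y) - b2 (clamp (x - y)) * k2 (clamp y)) with
        ((b1 (clamp (x - y)) - b2 (clamp (x - y))) * k1 (clamp y) + b2 (clamp (x - y)) * (k1 (clamp y) - k2 (clamp y))) by ring.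
      eapply Rle_trans. apply Rabs_triang. rewrite !Rabs_mult.
      apply Rplus_le_compat; apply Rmult_le_compat; try apply Rabs_pos; auto.
      all: lra. }
    rewrite Hs in Hle.
    assert (D * K * x <= D * K). { pose proof (Rmult_le_pos _ _ D0 K0). nra. }
    nra. }
  apply sup_le. intros x Hx.
  replace (k1 x - k2 x) with (dc x) by (unfold dc; rewrite clamp_id; auto).
  eapply Rle_trans. apply Hd; auto.
  assert (E3 : exp (3 * B) = exp B * exp B * exp B).
  { rewrite <- !exp_plus. f_equal. ring. }
  assert (eB : 1 + B <= exp B) by apply exp_ineq1_le.
  assert (ex : exp (B * x) <= exp B) by (apply exp_le; nra).
  assert (ep : 0 < exp B) by apply exp_pos.
  assert (ep2 : 0 < exp (B * x)) by apply exp_pos.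
  assert (h1 : 1 + K <= exp B * exp B) by (unfold K; nra).
  rewrite E3.
  assert (h2 : (1 + K) * exp (B * x) <= exp B * exp B * exp B).
  { apply Rmult_le_compat; try lra. }
  replace (D * (1 + K) * exp (B * x)) with (D * ((1 + K) * exp (B * x))) by ring.
  rewrite (Rmult_comm _ D). apply Rmult_le_compat_l; auto.
Qed.
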